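(* Let $P$ and $U$ be finite sets of points in $\mathbb{R}^d$ with $|P|=n_{\mathrm p}$, $|U|=n_{\mathrm u}$, let $\pi\in(0,1)$, $w_{\mathrm p}=\pi/n_{\mathrm p}$, $w_{\mathrm u}=1/n_{\mathrm u}$, and let $P'\subseteq P$, $U'\subseteq U$, not both empty. Let $W_{\mathrm p}=|P'|w_{\mathrm p}$ and $W_{\mathrm n}=|U'|w_{\mathrm u}-|P'|w_{\mathrm p}$. Let $\ell(v,y)=1/(1+\exp(vy))$ be the sigmoid loss and $$\hat R_{\mathrm{uPU}}(v;P',U')=\sum_{\mathbf{x}\in P'}w_{\mathrm p}\ell(v,+1)-\sum_{\mathbf{x}\in P'}w_{\mathrm p}\ell(v,-1)+\sum_{\mathbf{x}\in U'}w_{\mathrm u}\ell(v,-1).$$ Then $$\inf_{v\in\mathbb{R}}\hat R_{\mathrm{uPU}}(v;P',U')=\min\{W_{\mathrm p},W_{\mathrm n}\}.$$ *)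

(* Defs.v *)
From HB Require Import structures.
From mathcomp Require Import all_boot all_order all_algebra.
From mathcomp Require Import finmap.
From mathcomp Require Import all_classical all_reals all_analysis.
Set Implicit Arguments. Unset Strict Implicit. Unset Printing Implicit Defensive.
Import Order.TTheory GRing.Theory Num.Theory.
Local Open Scope ring_scope.

Definition sigmoid_loss (R : realType) (v y : R) : R := 1 / (1 + expR (v * y)).

Definition R_uPU (R : realType) (d : nat) (wp wu : R)
    (P' U' : {fset 'rV[R]_d}) (v : R) : R :=
  \sum_(x <- P') wp * sigmoid_loss v 1
  - \sum_(x <- P') wp * sigmoid_loss v (-1)
  + \sum_(x <- U') wu * sigmoid_loss v (-1).

(* Main.v *)
Require Import Defs.
From HB Require Import structures.
From mathcomp Require Import all_boot all_order all_algebra.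
From mathcomp Require Import finmap.
From mathcomp Require Import all_classical all_reals all_analysis.
From mathcomp Require Import ring lra.
Import Order.TTheory GRing.Theory Num.Theory.
Local Open Scope ring_scope.
Local Open Scope fset_scope.
Local Open Scope ring_scope.

Lemma sum_cst (R : realType) d (A : {fset 'rV[R]_d}) (c : R) :
  \sum_(x <- A) c = (#|` A|)%:R * c.
Proof. by rewrite big_const_seq count_predT iter_addr_0 mulr_natl. Qed.

Lemma sigN (R : realType) (v : R) : sigmoid_loss v (-1) = 1 - sigmoid_loss v 1.
Proof.
rewrite /sigmoid_loss !mulr1 mulrN1 expRN.
have h := expR_gt0 v.
have h1 : 1 + expR v != 0 by apply: lt0r_neq0; lra.
have h2 : expR v != 0 by apply: lt0r_neq0.
have h3 : 1 + (expR v)^-1 != 0 by apply: lt0r_neq0; rewrite addr_gt0 ?invr_gt0.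
by field; rewrite ?h1 ?h2 ?h3.
Qed.

Lemma sig_surj (R : realType) (t : R) : 0 < t < 1 -> exists v, sigmoid_loss v 1 = t.
Proof.
move=> /andP[t0 t1]; exists (ln (1/t - 1)).
rewrite /sigmoid_loss mulr1 lnK; last first.
  rewrite posrE subr_gt0 ltr_pdivlMr // mul1r //.
rewrite addrC subrK; field; exact: lt0r_neq0.
Qed.

Lemma sig_range (R : realType) (v : R) : 0 < sigmoid_loss v 1 < 1.
Proof.
rewrite /sigmoid_loss mulr1; have h := expR_gt0 v.
apply/andP; split; first by rewrite divr_gt0 //; lra.
by rewrite ltr_pdivrMr ?mul1r; lra.
Qed.

Lemma approx (R : realType) (c e : R) : 0 <= c -> 0 < e -> exists d, 0 < d < 1 /\ d * c <= e.
Proof.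
move=> c0 e0; have ce : 0 < c + 2 * e by lra.
exists (e / (c + 2 * e)); split.
  apply/andP; split; first by rewrite divr_gt0.
  by rewrite ltr_pdivrMr // mul1r; lra.
by rewrite mulrAC ler_pdivrMr //; nra.
Qed.

Local Open Scope fset_scope.
Theorem proposition5 (R : realType) (d : nat) (P U P' U' : {fset 'rV[R]_d})
  (pi : R) (hpi0 : 0 < pi) (hpi1 : pi < 1)
  (hP' : P' `<=` P) (hU' : U' `<=` U) (hne : (P' != fset0) || (U' != fset0)) :
  let np := #|` P| in let nu := #|` U| in
  let wp := pi / np%:R in let wu := 1 / nu%:R in
  let Wp := (#|` P'|)%:R * wp in
  let Wn := (#|` U'|)%:R * wu - (#|` P'|)%:R * wp in
  inf [set R_uPU wp wu P' U' v | v in [set: R]] = Num.min Wp Wn.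
Proof.
Local Open Scope ring_scope.
move=> np nu wp wu Wp Wn.
have key v : R_uPU wp wu P' U' v = Wn + sigmoid_loss v 1 * (Wp - Wn).
  by rewrite /R_uPU !sum_cst sigN /Wn /Wp; ring.
set S := (X in inf X).
set m := Num.min Wp Wn.
have mWp : m <= Wp by rewrite ge_min lexx.
have mWn : m <= Wn by rewrite ge_min lexx orbT.
have lbS : lbound S m.
  move=> y [v _ <-]; rewrite key.
  have /andP[t0 t1] := sig_range _ v; set t := sigmoid_loss v 1 in t0 t1 *.
  have -> : Wn + t * (Wp - Wn) = (1 - t) * Wn + t * Wp by ring.
  nra.
have S0 : nonempty S by exists (R_uPU wp wu P' U' 0); exists 0 => //.
have hlb : has_lbound S by exists m.
apply/eqP; rewrite eq_le; apply/andP; split; last exact: lb_le_inf.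
have inS t : 0 < t < 1 -> inf S <= Wn + t * (Wp - Wn).
  move=> /sig_surj [v <-]; apply: ge_inf => //; rewrite -key; by exists v.
apply/ler_addgt0Pr => e e0.
case: (leP Wp Wn) => h.
  have [dl [/andP[d0 d1] dc]] := @approx R (Wn - Wp) e ltac:(lra) e0.
  have := inS (1 - dl); rewrite /m min_l //.
  have -> : Wn + (1 - dl) * (Wp - Wn) = Wp + dl * (Wn - Wp) by ring.
  move=> H; have := H ltac:(apply/andP; split; lra); lra.
have [dl [/andP[d0 d1] dc]] := @approx R (Wp - Wn) e ltac:(lra) e0.
have := inS dl; rewrite /m min_r; last exact: ltW.
move=> H; have := H ltac:(apply/andP; split; lra); lra.
Qed.
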